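(* For parameters $a,b\in[0,1]$ define $f_{a,b}:[0,1]\to[0,1]$ by $$f_{a,b}(x)=\begin{cases}(1-2a)x^2+2ax, & x\in[0,\frac13],\\ (1-2b)x^2+2bx, & x\in(\frac13,\frac23),\\ x, & x\in[\frac23,1].\end{cases}$$ For each pair $x_1,x_2$ satisfying $$x_1\in\Big(1-\tfrac{\sqrt6}{3},\tfrac13\Big),\qquad x_2\in\Big(\tfrac13,\,x_1(2-x_1)\Big),$$ there exists a unique pair $a,b$ such that $x_1,x_2$ is a 2-periodic orbit of $f_{a,b}$, i.e. $f_{a,b}(x_1)=x_2$ and $f_{a,b}(x_2)=x_1$.
   Context: A 2-periodic orbit $x_1,x_2$ here means $x_1\ne x_2$ with $f_{a,b}(x_1)=x_2$, $f_{a,b}(x_2)=x_1$. The map $f_{a,b}$ is the reduction to $[0,1]$ of the quadratic stochastic operator $x'=x^2+2p(x)xy$, $y'=2(1-p(x))xy+y^2$ (with $y=1-x$), where $p(x)=a$ for $x\le\frac13$, $b$ for $\frac13<x<\frac23$, and $\frac12$ for $x\ge\frac23$. *)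

(* Defs.v *)
From Stdlib Require Import Reals Lra.
Open Scope R_scope.

(* f_{a,b} on [0,1] (values outside [0,1] are irrelevant; the third branch
   is used for x >= 2/3). *)
Definition f_ab (a b x : R) : R :=
  if Rle_dec x (1/3) then (1 - 2*a) * x^2 + 2*a*x
  else if Rlt_dec x (2/3) then (1 - 2*b) * x^2 + 2*b*x
  else x.

Definition two_periodic_orbit (a b x1 x2 : R) : Prop :=
  0 <= x1 <= 1 /\ 0 <= x2 <= 1 /\ x1 <> x2 /\
  f_ab a b x1 = x2 /\ f_ab a b x2 = x1.

(* Main.v *)
Require Import Defs.
From Stdlib Require Import Reals.
From Stdlib Require Import Lra Psatz.
Open Scope R_scope.

Theorem theorem2p5 (x1 x2 : R) :
  1 - sqrt 6 / 3 < x1 < 1/3 ->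
  1/3 < x2 < x1 * (2 - x1) ->
  exists a b : R,
    (0 <= a <= 1 /\ 0 <= b <= 1 /\ two_periodic_orbit a b x1 x2) /\
    (forall a' b' : R, 0 <= a' <= 1 -> 0 <= b' <= 1 ->
       two_periodic_orbit a' b' x1 x2 -> a' = a /\ b' = b).
Proof.
  intros [H1 H2] [H3 H4].
  assert (Hs : sqrt 6 < 3).
  { assert (h6 := sqrt_sqrt 6). assert (h0 := sqrt_pos 6). nra. }
  assert (Hx1 : 0 < x1) by lra.
  assert (Hx2 : x2 < 2/3) by nra.
  assert (F1 : forall a b, f_ab a b x1 = (1 - 2*a) * x1^2 + 2*a*x1).
  { intros; unfold f_ab; destruct (Rle_dec x1 (1/3)); [reflexivity|lra]. }
  assert (F2 : forall a b, f_ab a b x2 = (1 - 2*b) * x2^2 + 2*b*x2).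
  { intros; unfold f_ab; destruct (Rle_dec x2 (1/3)); [lra|].
    destruct (Rlt_dec x2 (2/3)); [reflexivity|lra]. }
  assert (D1 : 0 < 2*x1*(1-x1)) by nra.
  assert (D2 : 0 < 2*x2*(1-x2)) by nra.
  set (a := (x2 - x1^2)/(2*x1*(1-x1))).
  set (b := (x1 - x2^2)/(2*x2*(1-x2))).
  assert (ha : a*(2*x1*(1-x1)) = x2 - x1^2) by (unfold a; field; lra).
  assert (hb : b*(2*x2*(1-x2)) = x1 - x2^2) by (unfold b; field; lra).
  assert (Hq : x2^2 <= x1).
  { assert (x2 ^2 <= (x1*(2-x1))^2) by nra. nra. }
  exists a, b. split.
  - split; [split; nra|]. split; [split; nra|].
    unfold two_periodic_orbit. rewrite F1, F2.
    repeat split; try lra; nra.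
  - intros a' b' _ _ [_ [_ [_ [E1 E2]]]].
    rewrite F1 in E1. rewrite F2 in E2.
    split.
    + apply (Rmult_eq_reg_r (2*x1*(1-x1))); [|lra]. nra.
    + apply (Rmult_eq_reg_r (2*x2*(1-x2))); [|lra]. nra.
Qed.
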